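(* Let $d\ge0$ and $n>d$ be integers, let $T=\{T_1,\dots,T_l\}\in L(n,d)$ with $T\neq\{\emptyset\}$, and let $m$ be a positive integer. Let $$M(m,T)=\Bigl\{(m_1,\dots,m_l)\in\mathbb{Z}_{>0}^l:\ m_i\ge\operatorname{codim}_d(T_i)\ \forall i;\ m_i=1\text{ whenever }\operatorname{codim}_d(T_i)=1;\ m=m_1+\cdots+m_l\Bigr\}.$$ Then $$\kappa_{n,d}(m,T)=\sum_{(m_1,\dots,m_l)\in M(m,T)}\ \prod_{i=1}^l\kappa_{n-|T_i|,\,d-|T_i|}(m_i,\{\emptyset\}).$$
   Context: For a finite set $X$ let $\operatorname{codim}_d(X)=d+1-|X|$. For a finite collection $\{T_1,\dots,T_l\}$ of pairwise distinct finite sets put $\rho_d(\{T_1,\dots,T_l\})=\sum_{i=1}^l\operatorname{codim}_d(T_i)$ (with $\rho_d(\emptyset)=0$) and $D_d(\{T_1,\dots,T_l\})=\operatorname{codim}_d(T_1\cap\cdots\cap T_l)-\rho_d(\{T_1,\dots,T_l\})$. For integers $d\ge0$, $n>d$, $L(n,d)$ is the set of all collections $T$ of subsets of $\{1,\dots,n\}$ such that (i) $D_d(T')>0$ for every $T'\subset T$ with $|T'|>1$, and (ii) $0\le|T_i|\le d$ for every $T_i\in T$. It is partially ordered by: $T<T'$ iff $\rho_d(T)<\rho_d(T')$ and for every $T_i\in T$ there exists $T'_j\in T'$ with $T'_j\subset T_i$; $T\le T'$ means $T<T'$ or $T=T'$. With this order $L(n,d)$ is a lattice ($\emptyset$ minimum,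 $\{\emptyset\}$ maximum); $\vee$ denotes its join. For $X\subset\{1,\dots,n\}$ with $|X|=d$, $\{X\}\in L(n,d)$ is called a hyperplane. For $T\in L(n,d)$ and a positive integer $m$, $\kappa_{n,d}(m,T)$ is the number of $m$-element sets $\{X_1,\dots,X_m\}$ of distinct $d$-element subsets of $\{1,\dots,n\}$ such that $\{X_1\}\vee\cdots\vee\{X_m\}=T$; by convention $\kappa_{n,0}(m,\{\emptyset\})=1$ for all $n,m$. *)

(* Defs.v *)
From mathcomp Require Import all_boot all_order all_algebra.
Set Implicit Arguments. Unset Strict Implicit. Unset Printing Implicit Defensive.
Import Order.TTheory GRing.Theory Num.Theory.
Local Open Scope ring_scope.

(* The ground set {1,...,n} is modelled by 'I_n; a collection of subsets is
   a {set {set 'I_n}}. *)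

Definition codim (n d : nat) (X : {set 'I_n}) : int := (d.+1)%:Z - (#|X|)%:Z.

Definition rho (n d : nat) (T : {set {set 'I_n}}) : int :=
  \sum_(X in T) codim d X.

Definition bigcapT (n : nat) (T : {set {set 'I_n}}) : {set 'I_n} :=
  \bigcap_(X in T) X.

Definition Dd (n d : nat) (T : {set {set 'I_n}}) : int :=
  codim d (bigcapT T) - rho d T.

Definition inL (n d : nat) (T : {set {set 'I_n}}) : bool :=
  [forall T' : {set {set 'I_n}},
      ((T' \subset T) && (1 < #|T'|)%N) ==> (0 < Dd d T')]
  && [forall X in T, (#|X| <= d)%N].

Definition ltL (n d : nat) (T T' : {set {set 'I_n}}) : bool :=
  (rho d T < rho d T') && [forall X in T, [exists Y in T', Y \subset X]].

Definition leL (n d : nat) (T T' : {set {set 'I_n}}) : bool :=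
  ltL d T T' || (T == T').

Definition is_join (n d : nat) (S : {set {set {set 'I_n}}})
    (T : {set {set 'I_n}}) : bool :=
  [&& inL d T,
      [forall U in S, leL d U T]
    & [forall U : {set {set 'I_n}},
         (inL d U && [forall V in S, leL d V U]) ==> leL d T U]].

(* kappa_{n,d}(m,T): number of m-element sets {X_1,...,X_m} of distinct
   d-element subsets with {X_1} v ... v {X_m} = T; with the convention
   kappa_{n,0}(m,{emptyset}) = 1. *)
Definition kappa (n d m : nat) (T : {set {set 'I_n}}) : nat :=
  if (d == 0%N) && (T == [set set0]) then 1%N
  else #|[set H : {set {set 'I_n}} |
            [&& #|H| == m, [forall X in H, #|X| == d]
              & is_join d [set [set X] | X in H] T]]|.

(* Main.v *)
Require Import Defs.
From mathcomp Require Import all_boot all_order all_algebra.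
From mathcomp Require Import zify.
Import Order.TTheory GRing.Theory Num.Theory.
Set Implicit Arguments. Unset Strict Implicit. Unset Printing Implicit Defensive.
Local Open Scope ring_scope.

Definition cod {K : finType} (d : nat) (X : {set K}) : int := (d.+1)%:Z - (#|X|)%:Z.
Definition rhoK {K : finType} d (T : {set {set K}}) : int := \sum_(X in T) cod d X.
Definition capK {K : finType} (T : {set {set K}}) : {set K} := \bigcap_(X in T) X.
Definition DK {K : finType} d (T : {set {set K}}) : int := cod d (capK T) - rhoK d T.
Definition inLK {K : finType} d (T : {set {set K}}) : bool :=
  [forall T' : {set {set K}}, ((T' \subset T) && (1 < #|T'|)%N) ==> (0 < DK d T')]
  && [forall X in T, (#|X| <= d)%N].
Definition refines {K : finType} (T U : {set {set K}}) :=
  [forall X in T, [exists Y in U, Y \subset X]].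

Lemma cod_ge1 {K : finType} d (X : {set K}) : (#|X| <= d)%N -> 1 <= cod d X.
Proof. rewrite /cod => h; lia. Qed.

Lemma rho_ge0 {K : finType} d (T : {set {set K}}) :
  [forall X in T, (#|X| <= d)%N] -> 0 <= rhoK d T.
Proof.
move/forall_inP=> h; rewrite /rhoK; apply: sumr_ge0 => X XT.
by apply: le_trans (cod_ge1 (h X XT)).
Qed.

Lemma rho_sub {K : finType} d (S T : {set {set K}}) :
  [forall X in T, (#|X| <= d)%N] -> S \subset T -> rhoK d S <= rhoK d T.
Proof.
move/forall_inP=> h sST; rewrite /rhoK [X in _ <= X](big_setID S) /= (setIidPr sST) lerDl.
apply: sumr_ge0 => X; rewrite inE => /andP[_ XT].
by apply: le_trans (cod_ge1 (h X XT)).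
Qed.

Lemma refines_refl {K : finType} (T : {set {set K}}) : refines T T.
Proof. by apply/forall_inP=> X XT; apply/exists_inP; exists X. Qed.

Lemma refines_trans {K : finType} (T U V : {set {set K}}) :
  refines T U -> refines U V -> refines T V.
Proof.
move=> /forall_inP h1 /forall_inP h2; apply/forall_inP=> X XT.
have /exists_inP[Y YU sYX] := h1 X XT.
have /exists_inP[Z ZV sZY] := h2 Y YU.
by apply/exists_inP; exists Z => //; apply: subset_trans sYX.
Qed.

Lemma inLK_sub {K : finType} d (S T : {set {set K}}) :
  inLK d T -> S \subset T -> inLK d S.
Proof.
move=> /andP[/forallP h1 /forall_inP h2] sST; apply/andP; split.
  apply/forallP=> T'; apply/implyP=> /andP[sT' c]; move: (h1 T').
  by rewrite (subset_trans sT' sST) c.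
by apply/forall_inP=> X XS; apply: h2; apply: (subsetP sST).
Qed.

Lemma inLK_size {K : finType} d (T : {set {set K}}) X :
  inLK d T -> X \in T -> (#|X| <= d)%N.
Proof. by move=> /andP[_ /forall_inP h]; apply: h. Qed.

Lemma inLK_D {K : finType} d (T S : {set {set K}}) :
  inLK d T -> S \subset T -> (1 < #|S|)%N -> 0 < DK d S.
Proof.
by move=> /andP[/forallP h _] sST c; move: (h S); rewrite sST c.
Qed.

Lemma capK_sub {K : finType} (S : {set {set K}}) (Y : {set K}) :
  (forall X, X \in S -> Y \subset X) -> Y \subset capK S.
Proof. by move=> h; apply/bigcapsP. Qed.

Lemma cod_le {K : finType} d (X Y : {set K}) : Y \subset X -> cod d X <= cod d Y.
Proof. move=> /subset_leq_card h; rewrite /cod; lia. Qed.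

Lemma perY {K : finType} d (T S : {set {set K}}) (Y : {set K}) :
  inLK d T -> S \subset T -> (#|Y| <= d)%N -> (forall X, X \in S -> Y \subset X) ->
  S != [set Y] -> rhoK d S < cod d Y.
Proof.
move=> LT sST hY hS nSY.
have [c0|c1] := leqP #|S| 1.
  have [S0|[X XS]] := set_0Vmem S.
    by rewrite S0 /rhoK big_set0; apply: lt_le_trans (cod_ge1 hY).
  have SX : S = [set X].
    apply/eqP; rewrite eq_sym eqEcard sub1set XS cards1 c0 //.
  rewrite SX /rhoK big_set1.
  have sYX := hS X XS.
  have nXY : X != Y by apply: contraNneq nSY => <-; rewrite SX.
  have := subset_leqif_cards sYX; rewrite eq_sym (negbTE nXY) => -[h1 h2].
  have : (#|Y| < #|X|)%N by rewrite ltn_neqAle h1 h2.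
  rewrite /cod; lia.
have := inLK_D LT sST c1; rewrite /DK.
have := cod_le d (capK_sub hS); lia.
Qed.

Lemma perY_le {K : finType} d (T S : {set {set K}}) (Y : {set K}) :
  inLK d T -> S \subset T -> (#|Y| <= d)%N -> (forall X, X \in S -> Y \subset X) ->
  rhoK d S <= cod d Y.
Proof.
move=> LT sST hY hS; have [->|n] := eqVneq S [set Y]; first by rewrite /rhoK big_set1.
by apply: ltW; apply: perY LT sST hY hS n.
Qed.

Definition sig_of {K : finType} (U : {set {set K}}) (X : {set K}) : {set K} :=
  odflt set0 [pick Y in U | Y \subset X].

Lemma sig_ofP {K : finType} (U : {set {set K}}) (X : {set K}) :
  [exists Y in U, Y \subset X] -> sig_of U X \in U /\ sig_of U X \subset X.
Proof.
rewrite /sig_of; case: pickP => [Y /andP[h1 h2] _ | h] //=.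
by move=> /exists_inP[Y h1 h2]; move: (h Y); rewrite h1 h2.
Qed.

Lemma rho_partition {K : finType} d (T U : {set {set K}}) :
  refines T U ->
  rhoK d T = \sum_(Y in U) rhoK d [set X in T | sig_of U X == Y].
Proof.
move=> /forall_inP hr; rewrite /rhoK (partition_big (sig_of U) [in U]).
  by apply: eq_bigr => Y _; apply: eq_bigl => X; rewrite inE.
by move=> X XT; have [] := sig_ofP (hr X XT).
Qed.

Lemma mono_le {K : finType} d (T U : {set {set K}}) :
  inLK d T -> [forall Y in U, (#|Y| <= d)%N] -> refines T U -> rhoK d T <= rhoK d U.
Proof.
move=> LT /forall_inP hU hr; rewrite (rho_partition d hr) /rhoK [X in _ <= X]/=.
apply: ler_sum => Y YU; apply: (perY_le LT) => //.
- by apply/subsetP=> X; rewrite inE => /andP[].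
- exact: hU.
- move=> X; rewrite inE => /andP[XT /eqP <-].
  by have [] := sig_ofP (forall_inP hr X XT).
Qed.

Lemma mono_lt {K : finType} d (T U : {set {set K}}) :
  inLK d T -> [forall Y in U, (#|Y| <= d)%N] -> refines T U -> T != U ->
  rhoK d T < rhoK d U.
Proof.
move=> LT /forall_inP hU hr nTU.
pose S Y := [set X in T | sig_of U X == Y].
have sS Y : S Y \subset T by apply/subsetP=> X; rewrite inE => /andP[].
have hS Y X : X \in S Y -> Y \subset X.
  by rewrite inE => /andP[XT /eqP <-]; have [] := sig_ofP (forall_inP hr X XT).
have [Y0 Y0U nY0] : exists2 Y0, Y0 \in U & S Y0 != [set Y0].
  apply/exists_inP; apply: contraNT nTU => /exists_inPn h.
  apply/eqP/setP=> X; apply/idP/idP => [XT|XU].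
    have [h1 _] := sig_ofP (forall_inP hr X XT).
    have := h _ h1; rewrite negbK => /eqP SX.
    have : X \in S (sig_of U X) by rewrite inE XT eqxx.
    by rewrite SX inE => /eqP ->.
  have := h _ XU; rewrite negbK => /eqP SX.
  by apply: (subsetP (sS X)); rewrite SX set11.
rewrite (rho_partition d hr) /rhoK [X in _ < X]/=.
rewrite (bigD1 Y0) //= [X in _ < X](bigD1 Y0) //=.
apply: ltr_leD.
  exact: (perY LT (sS Y0) (hU _ Y0U) (@hS Y0) nY0).
apply: ler_sum => Y /andP[YU _]; exact: (perY_le LT (sS Y) (hU _ YU) (@hS Y)).
Qed.

Lemma rho_U1 {K : finType} d (c : {set K}) (B : {set {set K}}) :
  (#|c| <= d)%N -> rhoK d (c |: B) <= cod d c + rhoK d B.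
Proof.
move=> hc; case: (boolP (c \in B)) => cB.
  rewrite (setUidPr _) ?sub1set // lerDr; exact: le_trans (cod_ge1 hc).
by rewrite /rhoK big_setU1.
Qed.

Lemma rho_split {K : finType} d (S V : {set {set K}}) :
  S \subset V -> rhoK d V = rhoK d S + rhoK d (V :\: S).
Proof. by move=> sSV; rewrite /rhoK (big_setID S) /= (setIidPr sSV). Qed.

Lemma rho_ge_elt {K : finType} d (W : {set {set K}}) (Y : {set K}) :
  [forall X in W, (#|X| <= d)%N] -> Y \in W -> cod d Y <= rhoK d W.
Proof.
move=> h YW; have -> : cod d Y = rhoK d [set Y] by rewrite /rhoK big_set1.
by apply: rho_sub h _; rewrite sub1set.
Qed.

Lemma inLK_sizes {K : finType} d (T : {set {set K}}) :
  inLK d T -> [forall X in T, (#|X| <= d)%N].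
Proof. by case/andP. Qed.

Lemma rho_top {K : finType} d (W : {set {set K}}) :
  inLK d W -> set0 \notin W -> rhoK d W <= d%:Z.
Proof.
move=> LW n0.
have [c0|c1] := leqP #|W| 1.
  have [W0|[X XW]] := set_0Vmem W; first by rewrite W0 /rhoK big_set0.
  have WX : W = [set X].
    apply/eqP; rewrite eq_sym eqEcard sub1set XW cards1 c0 //.
  rewrite WX /rhoK big_set1 /cod.
  have : X != set0 by apply: contraNneq n0 => <-.
  rewrite -card_gt0; lia.
have := inLK_D LW (subxx W) c1; rewrite /DK /cod; lia.
Qed.

Lemma inLK_single {K : finType} d (X : {set K}) : (#|X| <= d)%N -> inLK d [set X].
Proof.
move=> hX; apply/andP; split.
  apply/forallP=> T'; apply/implyP=> /andP[sT' c].
  by have := subset_leq_card sT'; rewrite cards1; lia.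
by apply/forall_inP=> Y; rewrite inE => /eqP ->.
Qed.

Lemma reduce {K : finType} d (A : {set K}) (V : {set {set K}}) :
  [forall Y in V, (#|Y| <= d)%N] -> [forall Y in V, Y \subset A] ->
  exists V', [/\ inLK d V', [forall Y in V', Y \subset A], refines V V'
               & rhoK d V' <= rhoK d V].
Proof.
have [k] := ubnP #|V|; elim: k V => // k IH V hk hs hA.
case: (boolP (inLK d V)) => LV; first by exists V; split => //; apply: refines_refl.
move: LV; rewrite /inLK hs andbT => /forallPn [T' /=].
rewrite negb_imply => /andP[/andP[sT' c1] hD].
have /set0Pn[X0 X0T] : T' != set0 by rewrite -card_gt0 ltnW.
pose c := capK T'.
have cX X : X \in T' -> c \subset X by move=> XT; apply: bigcap_inf.
have hc : (#|c| <= d)%N.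
  apply: leq_trans (subset_leq_card (cX _ X0T)) _.
  exact: (forall_inP hs) (subsetP sT' _ X0T).
pose V1 := c |: (V :\: T').
have cV1 : (#|V1| < k)%N.
  have := cardsU1 c (V :\: T'); rewrite cardsD (setIidPr sT') => ->.
  have := subset_leq_card sT'; move: hk c1; case: (c \notin _) => /= h1 h2 h3; set a := #|V| in h1 h3 *; set b := #|T'| in h2 h3 *; lia.
have hs1 : [forall Y in V1, (#|Y| <= d)%N].
  apply/forall_inP=> Y; rewrite !inE => /orP[/eqP -> //|/andP[_ YV]].
  exact: (forall_inP hs).
have hA1 : [forall Y in V1, Y \subset A].
  apply/forall_inP=> Y; rewrite !inE => /orP[/eqP ->|/andP[_ YV]].
    apply: subset_trans (cX _ X0T) _; exact: (forall_inP hA) (subsetP sT' _ X0T).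
  exact: (forall_inP hA).
have [V' [L' A' r' h']] := IH V1 cV1 hs1 hA1.
exists V'; split => //.
  apply: refines_trans r'; apply/forall_inP=> X XV; apply/exists_inP.
  case: (boolP (X \in T')) => XT.
    by exists c; [rewrite !inE eqxx | exact: cX].
  by exists X => //; rewrite !inE XT XV orbT.
apply: le_trans h' _; apply: le_trans (rho_U1 (d:=d) (V :\: T') hc) _.
rewrite (rho_split d sT') lerD2r; move: hD; rewrite /DK -/c; lia.
Qed.

Definition onlytriv {K : finType} d (A : {set K}) (G : {set {set K}}) :=
  forall U, inLK d U -> [forall Y in U, Y \subset A] -> refines G U -> set0 \in U.

Lemma card_bigcup_le {I K : finType} (A : {set I}) (F : I -> {set K}) :
  (#|\bigcup_(i in A) F i| <= \sum_(i in A) #|F i|)%N.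
Proof.
elim/big_rec2: _ => [|i n X _ h]; first by rewrite cards0.
apply: leq_trans (leq_card_setU (F i) X).1 _; by rewrite leq_add2l.
Qed.

Lemma onlytriv_nonempty {K : finType} d (A : {set K}) (G : {set {set K}}) :
  onlytriv d A G -> G != set0.
Proof.
move=> h; apply/negP => /eqP G0.
suff : set0 \in (set0 : {set {set K}}) by rewrite inE.
apply: h.
- apply/andP; split; last by apply/forall_inP=> X; rewrite inE.
  apply/forallP=> T'; apply/implyP=> /andP[s c].
  by move: s; rewrite subset0 => /eqP T0; move: c; rewrite T0 cards0.
- by apply/forall_inP=> X; rewrite inE.
- by rewrite G0; apply/forall_inP=> X; rewrite inE.
Qed.

Lemma capD {K : finType} (S : {set {set K}}) (Z : {set K}) :
  S != set0 -> \bigcap_(Y in S) (Y :\: Z) = capK S :\: Z.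
Proof.
case/set0Pn=> Y0 Y0S; apply/setP=> x; rewrite inE.
apply/bigcapP/andP => [h|[hZ /bigcapP h] Y YS].
  split; first by have := h _ Y0S; rewrite inE => /andP[].
  by apply/bigcapP=> Y YS; have := h _ YS; rewrite inE => /andP[].
by rewrite inE hZ h.
Qed.

Lemma cod_proj {K : finType} d (Z Y : {set K}) :
  (#|Z| <= d)%N -> cod (d - #|Z|) (Y :\: Z) = cod d Y - (#|Z :\: Y|)%:Z.
Proof.
move=> hZ; have h1 := cardsID Z Y; have h2 := cardsID Y Z.
rewrite setIC in h2; rewrite /cod; lia.
Qed.

Lemma DK_proj {K : finType} d (Z : {set K}) (S : {set {set K}}) :
  (#|Z| <= d)%N -> S != set0 -> {in S &, injective (fun Y => Y :\: Z)} ->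
  DK d S <= DK (d - #|Z|) [set Y :\: Z | Y in S] .
Proof.
move=> hZ S0 inj.
have e1 : rhoK (d - #|Z|) [set Y :\: Z | Y in S]
          = rhoK d S - (\sum_(Y in S) #|Z :\: Y|)%:Z.
  rewrite /rhoK big_imset //= -natz natr_sum -sumrB.
  by apply: eq_bigr => Y _; rewrite cod_proj // natz.
have e2 : capK [set Y :\: Z | Y in S] = capK S :\: Z.
  by rewrite /capK big_imset //= capD.
have e3 : Z :\: capK S = \bigcup_(Y in S) (Z :\: Y).
  apply/setP=> x; rewrite inE; apply/andP/bigcupP.
    move=> [/bigcapP hn xZ].
    case: (boolP [forall Y in S, x \in Y]) => [/forall_inP h|].
      by case: hn => Y YS; apply: h.
    by case/forall_inPn=> Y YS nY; exists Y => //; rewrite inE nY.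
  case=> Y YS; rewrite inE => /andP[nY xZ]; split => //.
  by apply: contra nY => /bigcapP; apply.
have h3 := card_bigcup_le S (fun Y => Z :\: Y); rewrite -e3 in h3.
rewrite /DK e1 e2 cod_proj //.
move: h3; set a := #|Z :\: capK S|; set b := (\sum_(Y in S) _)%N; lia.
Qed.

Lemma local_cover {K : finType} d (Z : {set K}) (G U : {set {set K}}) :
  (forall X, X \in G -> Z \subset X /\ (#|X| <= d)%N) ->
  onlytriv (d - #|Z|) (~: Z) [set X :\: Z | X in G] ->
  inLK d U -> refines G U -> exists2 Y, Y \in U & Y \subset Z.
Proof.
move=> hG ot LU rGU.
have /set0Pn[X0' ] := onlytriv_nonempty ot.
case/imsetP=> X0 X0G _.
have hZ : (#|Z| <= d)%N.
  by have [s c] := hG X0 X0G; apply: leq_trans (subset_leq_card s) c.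
pose UG := [set Y in U | [exists X in G, Y \subset X]].
pose W := [set Y :\: Z | Y in UG].
suff : set0 \in W.
  case/imsetP=> Y; rewrite inE => /andP[YU _] /esym /eqP; rewrite setD_eq0 => sYZ.
  by exists Y.
apply: ot.
- apply/andP; split; last first.
    apply/forall_inP=> w /imsetP[Y]; rewrite inE => /andP[_ /exists_inP[X XG sYX]] ->.
    have [sZX cX] := hG X XG.
    have := subset_leq_card (setSD Z sYX).
    rewrite [#|X :\: Z|]cardsD (setIidPr sZX); lia.
  apply/forallP=> T'; apply/implyP=> /andP[sT' c1].
  pose h w := odflt set0 [pick Y in UG | Y :\: Z == w].
  have hP w : w \in W -> h w \in UG /\ h w :\: Z = w.
    rewrite /h; case: pickP => [Y /andP[h1 /eqP h2] _ | hn] //=.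
    by rewrite /W => /imsetP[Y YU e]; have := hn Y; rewrite /= YU -e eqxx.
  have injh : {in T' &, injective h}.
    move=> w1 w2 w1T w2T e.
    have [_ <-] := hP w1 (subsetP sT' _ w1T).
    by have [_ <-] := hP w2 (subsetP sT' _ w2T); rewrite e.
  pose S := h @: T'.
  have eT : [set Y :\: Z | Y in S] = T'.
    apply/setP=> w; apply/imsetP/idP.
      case=> Y /imsetP[w' w'T ->] ->.
      by have [_ ->] := hP w' (subsetP sT' _ w'T).
    move=> wT; exists (h w); first by apply: imset_f.
    by have [_ ->] := hP w (subsetP sT' _ wT).
  have injp : {in S &, injective (fun Y => Y :\: Z)}.
    move=> Y1 Y2 /imsetP[w1 w1T ->] /imsetP[w2 w2T ->] /=.
    have [_ ->] := hP w1 (subsetP sT' _ w1T).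
    by have [_ ->] := hP w2 (subsetP sT' _ w2T) => ->.
  have cS : #|S| = #|T'| by apply: card_in_imset.
  have S0 : S != set0 by rewrite -card_gt0 cS ltnW.
  have sSU : S \subset U.
    apply/subsetP=> Y /imsetP[w wT ->].
    by have [] := hP w (subsetP sT' _ wT); rewrite inE => /andP[].
  have := inLK_D LU sSU; rewrite cS => /(_ c1) hD.
  have := DK_proj hZ S0 injp; rewrite eT; exact: lt_le_trans.
- apply/forall_inP=> w /imsetP[Y _ ->]; apply/subsetP=> x; rewrite !inE.
  by case/andP.
- apply/forall_inP=> X' /imsetP[X XG ->].
  have /exists_inP[Y YU sYX] := forall_inP rGU X XG.
  apply/exists_inP; exists (Y :\: Z); last exact: setSD.
  apply: imset_f; rewrite inE YU; apply/exists_inP; exists X => //.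
Qed.

Lemma leL_iff n d (T U : {set {set 'I_n}}) :
  inL d T -> inL d U -> leL d T U = refines T U.
Proof.
move=> LT LU; rewrite /leL /ltL.
have [->|ne] := eqVneq T U; first by rewrite orbT refines_refl.
rewrite orbF; apply/andP/idP => [[]//|r]; split => //.
exact: (mono_lt LT (inLK_sizes LU) r ne).
Qed.

Lemma refines1 {K : finType} (X : {set K}) (U : {set {set K}}) :
  refines [set X] U = [exists Y in U, Y \subset X].
Proof.
apply/forall_inP/idP => [h|h Y]; first by apply: h; rewrite inE.
by rewrite inE => /eqP ->.
Qed.

Lemma refines_hyp {K : finType} (H U : {set {set K}}) :
  [forall V in [set [set X] | X in H], refines V U] = refines H U.
Proof.
apply/forall_inP/forall_inP => [h X XH|h V /imsetP[X XH ->]].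
  by rewrite -refines1; apply: h; apply: imset_f.
by rewrite refines1; apply: h.
Qed.

Lemma is_join_iff n d (H T : {set {set 'I_n}}) :
  (forall X, X \in H -> (#|X| <= d)%N) ->
  is_join d [set [set X] | X in H] T <->
  [/\ inL d T, refines H T &
      forall U, inL d U -> refines H U -> refines T U].
Proof.
move=> hH.
have eV U : inL d U -> [forall V in [set [set X] | X in H], leL d V U] = refines H U.
  move=> LU; rewrite -refines_hyp; apply: eq_forallb_in => V /imsetP[X XH ->].
  by rewrite leL_iff //; apply: inLK_single; apply: hH.
rewrite /is_join; split.
  case/and3P=> LT h1 /forallP h2; split => //; first by rewrite -eV.
  move=> U LU rU; move: (h2 U); rewrite LU eV // rU /= leL_iff //.
case=> LT h1 h2; apply/and3P; split => //; first by rewrite eV.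
apply/forallP=> U; apply/implyP=> /andP[LU]; rewrite eV // => rU.
by rewrite leL_iff //; apply: h2.
Qed.

Definition GZ {K : finType} (H : {set {set K}}) (Z : {set K}) :=
  [set X :\: Z | X in [set X in H | Z \subset X]].

Lemma rho_U {K : finType} d (A B : {set {set K}}) :
  [forall X in B, (#|X| <= d)%N] -> rhoK d (A :|: B) <= rhoK d A + rhoK d B.
Proof.
move=> hB; rewrite (rho_split d (subsetUl A B)) lerD2l.
apply: rho_sub hB _; apply/subsetP=> X; rewrite !inE; case/andP=> /negbTE -> //.
Qed.

Lemma cod_lift {K : finType} d (Z Y : {set K}) :
  (#|Z| <= d)%N -> Y \subset ~: Z -> cod d (Y :|: Z) = cod (d - #|Z|) Y.
Proof.
move=> hZ sY; have := cardsU Y Z.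
have -> : Y :&: Z = set0.
  apply/setP=> x; rewrite !inE; apply/negP=> /andP[/(subsetP sY)]; rewrite inE => /negP; done.
rewrite cards0 /cod; lia.
Qed.

Lemma liftDK {K : finType} (Z Y : {set K}) : Y \subset ~: Z -> (Y :|: Z) :\: Z = Y.
Proof.
move=> sY; apply/setP=> x; rewrite !inE.
case xZ: (x \in Z); last by rewrite orbF.
by rewrite orbT; apply/esym/negP => /(subsetP sY); rewrite inE xZ.
Qed.

Lemma join_char n d (H T : {set {set 'I_n}}) :
  (forall X, X \in H -> (#|X| <= d)%N) -> inL d T ->
  is_join d [set [set X] | X in H] T <->
  refines H T /\ (forall Z, Z \in T -> onlytriv (d - #|Z|) (~: Z) (GZ H Z)).
Proof.
move=> hH LT; rewrite is_join_iff //; split.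
  case=> _ rHT hU; split => // Z ZT W LW AW rW.
  have hZ : (#|Z| <= d)%N := inLK_size LT ZT.
  apply/negPn/negP => n0.
  have rW' := rho_top LW n0.
  pose V := (T :\ Z) :|: [set Y :|: Z | Y in W].
  have hsV : [forall X in V, (#|X| <= d)%N].
    apply/forall_inP=> X; rewrite inE => /orP[|/imsetP[Y YW ->]].
      by rewrite inE => /andP[_]; apply: inLK_size LT.
    have := (leq_card_setU Y Z).1.
    have := inLK_size LW YW; lia.
  have rHV : refines H V.
    apply/forall_inP=> X XH.
    have /exists_inP[Tj TjT sTjX] := forall_inP rHT X XH.
    have [eZ|nZ] := eqVneq Tj Z.
      have : X :\: Z \in GZ H Z by apply: imset_f; rewrite inE XH -eZ sTjX.
      move=> /(forall_inP rW) /exists_inP[Y YW sY].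
      apply/exists_inP; exists (Y :|: Z); first by apply/setUP; right; apply: imset_f.
      rewrite -eZ; apply/subsetP=> x; rewrite inE => /orP[/(subsetP sY)|/(subsetP sTjX)//].
      by rewrite inE => /andP[].
    by apply/exists_inP; exists Tj => //; rewrite !inE nZ TjT.
  have [V' [LV' _ rVV' hV']] := reduce (A := setT) hsV (introT (forall_inP) (fun X _ => subsetT X)).
  have rTV' := hU V' LV' (refines_trans rHV rVV').
  have h1 := mono_le LT (inLK_sizes LV') rTV'.
  have h2 : rhoK d V <= rhoK d (T :\ Z) + rhoK d [set Y :|: Z | Y in W].
    apply: rho_U; apply/forall_inP=> X XW; apply: (forall_inP hsV).
    by apply/setUP; right.
  have e1 : rhoK d T = cod d Z + rhoK d (T :\ Z).
    by rewrite (rho_split d (_ : [set Z] \subset T)) ?sub1set // /rhoK big_set1.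
  have e2 : rhoK d [set Y :|: Z | Y in W] = rhoK (d - #|Z|) W.
    rewrite /rhoK big_imset /=.
      by apply: eq_bigr => Y YW; rewrite cod_lift // (forall_inP AW).
    move=> Y1 Y2 Y1W Y2W e.
    by rewrite -(liftDK (forall_inP AW _ Y1W)) e liftDK // (forall_inP AW).
  move: h1 hV' h2 rW'; rewrite e1 e2 /cod; lia.
case=> rHT hZ; split => // U LU rHU; apply/forall_inP=> Z ZT.
have [||Y YU sYZ] := local_cover (G := [set X in H | Z \subset X]) (U := U) _ (hZ Z ZT) LU.
- by move=> X; rewrite inE => /andP[XH ->]; split => //; apply: hH.
- apply/forall_inP=> X; rewrite inE => /andP[XH _]; exact: (forall_inP rHU).
by apply/exists_inP; exists Y.
Qed.

Definition onlytrivb {K : finType} d (A : {set K}) (G : {set {set K}}) :=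
  [forall U : {set {set K}},
     [&& inLK d U, [forall Y in U, Y \subset A] & refines G U] ==> (set0 \in U)].

Lemma onlytrivP {K : finType} d (A : {set K}) (G : {set {set K}}) :
  reflect (onlytriv d A G) (onlytrivb d A G).
Proof.
apply: (iffP forallP) => h U.
  by move=> h1 h2 h3; move: (h U); rewrite h1 h2 h3.
by apply/implyP=> /and3P[h1 h2 h3]; apply: h.
Qed.

Lemma onlytriv_card {K : finType} d (A : {set K}) (G : {set {set K}}) :
  (forall X, X \in G -> #|X| = d) -> (forall X, X \in G -> X \subset A) ->
  onlytriv d A G -> (d < #|G|)%N.
Proof.
move=> hs hA ot.
have hs' : [forall Y in G, (#|Y| <= d)%N] by apply/forall_inP=> X /hs ->.
have [V' [LV' AV' rGV' hV']] := reduce hs' (introT forall_inP hA).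
have := rho_ge_elt (inLK_sizes LV') (ot V' LV' AV' rGV'); move: hV'.
have -> : rhoK d G = #|G|%:Z.
  rewrite /rhoK (eq_bigr (fun _ => 1)); last by move=> X /hs; rewrite /cod => ->; lia.
  by rewrite sumr_const natz.
rewrite /cod cards0; lia.
Qed.

Lemma uniq_member {K : finType} d (T : {set {set K}}) (Z1 Z2 X : {set K}) :
  inLK d T -> Z1 \in T -> Z2 \in T -> Z1 \subset X -> Z2 \subset X ->
  (#|X| <= d)%N -> Z1 = Z2.
Proof.
move=> LT Z1T Z2T s1 s2 cX; apply/eqP/negPn/negP => ne.
have sS : [set Z1; Z2] \subset T by apply/subsetP=> Y; rewrite !inE => /orP[]/eqP->.
have cS : #|[set Z1; Z2]| = 2%N by rewrite cards2 ne.
have := inLK_D LT sS; rewrite cS /DK => /(_ isT).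
have -> : capK [set Z1; Z2] = Z1 :&: Z2.
  by rewrite /capK big_setU1 ?inE //= big_set1.
have -> : rhoK d [set Z1; Z2] = cod d Z1 + cod d Z2.
  by rewrite /rhoK big_setU1 ?inE //= big_set1.
have := cardsU Z1 Z2.
have : (#|Z1 :|: Z2| <= #|X|)%N by apply: subset_leq_card; rewrite subUset s1 s2.
have := subset_leq_card (subsetIl Z1 Z2).
rewrite /cod; lia.
Qed.

Definition gS {K1 K2 : finType} (g : K1 -> K2) (U : {set {set K1}}) : {set {set K2}} :=
  [set g @: (Y : {set K1}) | Y in U].

Lemma img_sub {K1 K2 : finType} (g : K1 -> K2) (X Y : {set K1}) :
  injective g -> (g @: Y \subset g @: X) = (Y \subset X).
Proof.
move=> inj; apply/idP/idP => [h|]; last exact: imsetS.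
by apply/subsetP=> y yY; rewrite -(mem_imset _ _ inj); apply: (subsetP h); apply: imset_f.
Qed.

Lemma capK_img {K1 K2 : finType} (g : K1 -> K2) (S : {set {set K1}}) :
  injective g -> S != set0 -> capK (gS g S) = g @: capK S.
Proof.
move=> inj /set0Pn[Y0 Y0S].
rewrite /capK /gS big_imset /=; last by move=> ? ? _ _; apply: imset_inj.
apply/setP=> x; apply/bigcapP/imsetP.
  move=> h; have /imsetP[y yY0 ey] := h _ Y0S; exists y => //.
  apply/bigcapP=> Y YS; have /imsetP[y' y'Y e] := h _ YS.
  by rewrite (inj _ _ (etrans (esym ey) e)).
by case=> y /bigcapP hy -> Y YS; apply: imset_f; apply: hy.
Qed.

Lemma DK_img {K1 K2 : finType} (g : K1 -> K2) d (S : {set {set K1}}) :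
  injective g -> S != set0 -> DK d (gS g S) = DK d S.
Proof.
move=> inj S0; rewrite /DK capK_img // /cod card_imset //; congr (_ - _).
rewrite /rhoK /gS big_imset /=; last by move=> ? ? _ _; apply: imset_inj.
by apply: eq_bigr => Y _; rewrite /cod card_imset.
Qed.

Lemma card_gS {K1 K2 : finType} (g : K1 -> K2) (S : {set {set K1}}) :
  injective g -> #|gS g S| = #|S|.
Proof. by move=> inj; apply: card_imset; apply: imset_inj. Qed.

Lemma inLK_img {K1 K2 : finType} (g : K1 -> K2) d (U : {set {set K1}}) :
  injective g -> inLK d (gS g U) = inLK d U.
Proof.
move=> inj; rewrite /inLK; congr andb; last first.
  apply/forall_inP/forall_inP => h Y.
    by move=> YU; rewrite -(card_imset _ inj); apply: h; apply: imset_f.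
  by case/imsetP=> X XU ->; rewrite card_imset //; apply: h.
apply/forallP/forallP => h T'; apply/implyP => /andP[sT' c1].
  have := h (gS g T'); rewrite card_gS // c1 andbT.
  have -> : gS g T' \subset gS g U by apply: imsetS.
  rewrite DK_img //.
  by rewrite -card_gt0 ltnW.
pose S := [set Y in U | g @: Y \in T'].
have eT : gS g S = T'.
  apply/setP=> X; apply/imsetP/idP => [[Y]|XT]; first by rewrite inE => /andP[_ hh] ->.
  have /imsetP[Y YU eX] := subsetP sT' X XT.
  by exists Y => //; rewrite inE YU -eX.
have := h S; rewrite -(card_gS S inj) eT c1 andbT.
have -> : S \subset U by apply/subsetP=> Y; rewrite inE => /andP[].
rewrite -(DK_img d inj); first by rewrite eT; apply.
by rewrite -card_gt0 -(card_gS S inj) eT ltnW.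
Qed.

Lemma refines_img {K1 K2 : finType} (g : K1 -> K2) (G U : {set {set K1}}) :
  injective g -> refines (gS g G) (gS g U) = refines G U.
Proof.
move=> inj; apply/forall_inP/forall_inP => h X XG.
  have /exists_inP[Y' /imsetP[Y YU ->]] := h _ (imset_f _ XG).
  by rewrite img_sub // => sYX; apply/exists_inP; exists Y.
case/imsetP: XG => X' X'G ->.
have /exists_inP[Y YU sYX] := h _ X'G.
by apply/exists_inP; exists (g @: Y); [apply: imset_f | rewrite img_sub].
Qed.

Lemma set0_img {K1 K2 : finType} (g : K1 -> K2) (U : {set {set K1}}) :
  injective g -> (set0 \in gS g U) = (set0 \in U).
Proof.
move=> inj; apply/imsetP/idP => [[Y YU e]|U0]; last by exists set0; rewrite ?imset0.
have Y0 : Y = set0.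
  by apply/eqP; rewrite -cards_eq0 -(card_imset _ inj) -e cards0.
by rewrite -Y0.
Qed.

Lemma onlytriv_img {K1 K2 : finType} (g : K1 -> K2) d (G : {set {set K1}}) :
  injective g -> onlytriv d (g @: setT) (gS g G) <-> onlytriv d setT G.
Proof.
move=> inj; split => ot U LU AU rU.
  rewrite -(set0_img _ inj); apply: ot; rewrite ?inLK_img ?refines_img //.
  apply/forall_inP=> X /imsetP[Y _ ->]; exact: imsetS (subsetT Y).
pose U1 := [set g @^-1: (Y : {set K2}) | Y in U].
have eU : gS g U1 = U.
  apply/setP=> X; apply/imsetP/idP => [[Y /imsetP[X' X'U ->] ->]|XU].
    suff -> : g @: (g @^-1: X') = X' by [].
    apply/setP=> x; apply/imsetP/idP => [[y]|xX]; first by rewrite inE => h ->.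
    have /imsetP[y _ ey] := subsetP (forall_inP AU X' X'U) x xX.
    by exists y; rewrite // inE -ey.
  exists (g @^-1: X); first by apply: imset_f.
  apply/setP=> x; apply/idP/imsetP => [xX|[y]]; last by rewrite inE => h ->.
  have /imsetP[y _ ey] := subsetP (forall_inP AU X XU) x xX.
  by exists y; rewrite ?inE -?ey.
rewrite -eU set0_img //; apply: ot.
- by rewrite -(inLK_img d U1 inj) eU.
- by apply/forall_inP=> Y _; apply: subsetT.
- by rewrite -(refines_img _ _ inj) eU.
Qed.

Definition CZ n d (Z : {set 'I_n}) := [set X : {set 'I_n} | (#|X| == d) && (Z \subset X)].
Definition projZ {K : finType} (Z : {set K}) (G : {set {set K}}) := [set X :\: Z | X in G].
Definition AF n d (Z : {set 'I_n}) (f : nat) :=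
  [set G : {set {set 'I_n}} |
     [&& G \subset CZ d Z, #|G| == f & onlytrivb (d - #|Z|) (~: Z) (projZ Z G)]].

Lemma imset_preim {K1 K2 : finType} (g : K1 -> K2) (Y : {set K2}) :
  Y \subset g @: setT -> g @: (g @^-1: Y) = Y.
Proof.
move=> sY; apply/setP=> x; apply/imsetP/idP => [[y]|xY]; first by rewrite inE => h ->.
have /imsetP[y _ ey] := subsetP sY x xY.
by exists y; rewrite // inE -ey.
Qed.

Lemma proj_inj {K : finType} (Z : {set K}) (X1 X2 : {set K}) :
  Z \subset X1 -> Z \subset X2 -> X1 :\: Z = X2 :\: Z -> X1 = X2.
Proof.
move=> s1 s2 e; apply/setP=> x.
case xZ: (x \in Z); first by rewrite (subsetP s1 _ xZ) (subsetP s2 _ xZ).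
by have := congr1 (fun A : {set K} => x \in A) e; rewrite /= !inE xZ.
Qed.

Lemma card_projZ n d (Z : {set 'I_n}) (G : {set {set 'I_n}}) :
  G \subset CZ d Z -> #|projZ Z G| = #|G|.
Proof.
move=> sG; apply: card_in_imset => X1 X2 h1 h2; apply: proj_inj.
- by have := subsetP sG _ h1; rewrite inE => /andP[].
- by have := subsetP sG _ h2; rewrite inE => /andP[].
Qed.

Lemma AF_lower n d (Z : {set 'I_n}) f G :
  G \in AF d Z f -> (d - #|Z| < f)%N.
Proof.
rewrite inE => /and3P[sG /eqP <- /onlytrivP ot].
rewrite -(card_projZ sG); apply: onlytriv_card ot.
- move=> X' /imsetP[X XG ->]; have := subsetP sG _ XG; rewrite inE => /andP[/eqP <- sZX].
  by rewrite cardsD (setIidPr sZX).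
- move=> X' /imsetP[X XG ->]; apply/subsetP=> x; rewrite !inE; by case/andP.
Qed.

Lemma AF_top n d (Z : {set 'I_n}) f :
  #|Z| = d -> AF d Z f = if f == 1%N then [set [set Z]] else set0.
Proof.
move=> cZ.
have eC : CZ d Z = [set Z].
  apply/setP=> X; rewrite !inE; apply/andP/eqP => [[/eqP cX sZX]|->]; last by rewrite cZ.
  by apply/eqP; rewrite eq_sym eqEcard sZX /= cX cZ.
apply/setP=> G; rewrite inE eC.
case: (boolP (f == 1%N)) => [/eqP ->|f1].
  rewrite inE; apply/and3P/eqP => [[sG /eqP c1 _]|->].
    by apply/eqP; rewrite eqEcard sG cards1 c1.
  split; rewrite ?cards1 //.
  apply/onlytrivP => U LU AU rU.
  have : set0 \in projZ Z [set Z] by rewrite /projZ imset_set1 setDv inE.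
  move=> /(forall_inP rU) /exists_inP[Y YU]; rewrite subset0 => /eqP Y0.
  by rewrite -Y0.
rewrite inE; apply/negP => /and3P[sG /eqP cG /onlytrivP /onlytriv_nonempty ne].
have := subset_leq_card sG; rewrite cards1 cG.
have G0 : G != set0 by apply: contraNneq ne => ->; rewrite /projZ imset0.
move: G0; rewrite -cards_eq0 cG.
by move: f1; case: f {cG} => [|[|]].
Qed.

Lemma exists_g n (Z : {set 'I_n}) :
  exists g : 'I_(n - #|Z|) -> 'I_n, injective g /\ g @: setT = ~: Z.
Proof.
have e : #|~: Z| = (n - #|Z|)%N by have := cardsC Z; rewrite card_ord; lia.
exists (fun i => enum_val (cast_ord (esym e) i)); split.
  by move=> i j /enum_val_inj /cast_ord_inj.
apply/setP=> x; apply/imsetP/idP => [[i _ ->]|xZ]; first exact: enum_valP.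
exists (cast_ord e (enum_rank_in xZ x)) => //.
by rewrite cast_ordK enum_rankK_in.
Qed.

Lemma GZ0 {K : finType} (G : {set {set K}}) : GZ G set0 = G.
Proof.
apply/setP=> X; apply/imsetP/idP => [[Y]|XG]; first by rewrite inE setD0 => /andP[h _] ->.
by exists X; rewrite ?inE ?setD0 ?XG ?sub0set.
Qed.

Lemma join_top n d (G2 : {set {set 'I_n}}) :
  (forall X, X \in G2 -> (#|X| <= d)%N) ->
  is_join d [set [set X] | X in G2] [set set0] <-> onlytriv d setT G2.
Proof.
move=> hs; rewrite join_char //; last by apply: inLK_single; rewrite cards0.
split => [[_ h]|ot].
  by have := h set0; rewrite inE eqxx cards0 subn0 setC0 GZ0; apply.
split.
  apply/forall_inP=> X _; apply/exists_inP; exists set0; rewrite ?inE ?sub0set //.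
by move=> Z; rewrite inE => /eqP ->; rewrite cards0 subn0 setC0 GZ0.
Qed.

Lemma card_lift {K : finType} (Y Z : {set K}) :
  Y \subset ~: Z -> #|Y :|: Z| = (#|Y| + #|Z|)%N.
Proof.
move=> sY; have := cardsU Y Z.
have -> : Y :&: Z = set0.
  apply/setP=> x; rewrite !inE; apply/negP=> /andP[/(subsetP sY)]; rewrite inE => /negP; done.
rewrite cards0 subn0 //.
Qed.

Lemma setDU_K {K : finType} (X Z : {set K}) : Z \subset X -> (X :\: Z) :|: Z = X.
Proof.
move=> sZ; apply/setP=> x; rewrite !inE.
by case xZ: (x \in Z); rewrite ?orbT ?orbF ?andbT //= (subsetP sZ _ xZ).
Qed.

Lemma AF_kappa n d (Z : {set 'I_n}) f : (#|Z| < d)%N ->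
  #|AF d Z f| = kappa (d - #|Z|) f [set (set0 : {set 'I_(n - #|Z|)})].
Proof.
move=> kd.
have [g [inj rg]] := exists_g Z.
rewrite /kappa.
have -> : (d - #|Z| == 0)%N = false by apply/eqP; lia.
rewrite /=.
set B2 := [set H : {set {set 'I_(n - #|Z|)}} | _].
pose Phi (G2 : {set {set 'I_(n - #|Z|)}}) : {set {set 'I_n}} := [set g @: (Y : {set _}) :|: Z | Y in G2].
have sgY (Y : {set 'I_(n - #|Z|)}) : g @: Y \subset ~: Z by rewrite -rg; apply: imsetS; apply: subsetT.
have projPhi G2 : projZ Z (Phi G2) = gS g G2.
  apply/setP=> X; apply/imsetP/imsetP => [[X' /imsetP[Y YG ->] ->]|[Y YG ->]].
    by exists Y => //; rewrite (liftDK (sgY Y)).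
  by exists (g @: Y :|: Z); [apply: imset_f | rewrite (liftDK (sgY Y))].
have gSinj : injective (gS g) by apply: imset_inj; apply: imset_inj.
have Phi_inj : injective Phi.
  by move=> a b e; apply: gSinj; rewrite -!projPhi e.
have liftinj : injective (fun Y : {set 'I_(n - #|Z|)} => g @: Y :|: Z).
  move=> a b e; apply: (imset_inj inj); rewrite -(liftDK (sgY a)) -(liftDK (sgY b)).
  by rewrite /= e.
have cPhi G2 : #|Phi G2| = #|G2| by apply: card_imset.
suff -> : AF d Z f = Phi @: B2 by rewrite card_imset.
apply/setP=> G; apply/idP/imsetP => [GA|[G2 G2B ->]]; last first.
  move: G2B; rewrite inE => /and3P[/eqP cG2 /forall_inP sz J].
  rewrite inE; apply/and3P; split.
  - apply/subsetP=> X /imsetP[Y YG ->]; rewrite inE subsetUr andbT.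
    by rewrite (card_lift (sgY Y)) (card_imset _ inj) (eqP (sz Y YG)); rewrite subnK // ltnW.
  - by rewrite cPhi cG2.
  apply/onlytrivP; rewrite projPhi -rg; apply/(onlytriv_img _ _ inj).
  apply/(join_top (d:=(d - #|Z|)%N)) => // X XG; by rewrite (eqP (sz X XG)).
move: (GA); rewrite inE => /and3P[sG /eqP cG ot].
have hX X : X \in G -> #|X| = d /\ Z \subset X.
  by move=> XG; have := subsetP sG _ XG; rewrite inE => /andP[/eqP -> ->].
pose G2 := [set g @^-1: (X :\: Z) | X in G].
have ePhi : Phi G2 = G.
  apply/setP=> X; apply/imsetP/idP => [[Y /imsetP[X' X'G ->] ->]|XG].
    rewrite imset_preim; first by rewrite setDU_K //; have [] := hX X' X'G.
    by rewrite rg; apply/subsetP=> x; rewrite !inE => /andP[].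
  exists (g @^-1: (X :\: Z)); first by apply: imset_f.
  rewrite imset_preim; first by rewrite setDU_K //; have [] := hX X XG.
  by rewrite rg; apply/subsetP=> x; rewrite !inE => /andP[].
exists G2 => //.
have sz : forall Y, Y \in G2 -> #|Y| = (d - #|Z|)%N.
  move=> Y /imsetP[X XG ->].
  rewrite -(card_imset _ inj) imset_preim; last first.
    by rewrite rg; apply/subsetP=> x; rewrite !inE => /andP[].
  have [cX sZX] := hX X XG; by rewrite cardsD (setIidPr sZX) cX.
rewrite inE; apply/and3P; split.
- by rewrite -cPhi ePhi cG.
- by apply/forall_inP=> Y YG; rewrite sz.
apply/(join_top (d:=(d - #|Z|)%N)); first by move=> X XG; rewrite sz.
apply/(onlytriv_img _ _ inj); rewrite rg -projPhi ePhi; exact/onlytrivP.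
Qed.

Definition Ti n (T : {set {set 'I_n}}) (i : nat) : {set 'I_n} := nth set0 (enum T) i.

Lemma Ti_mem n (T : {set {set 'I_n}}) (i : 'I_(size (enum T))) : Ti T i \in T.
Proof. by rewrite -mem_enum /Ti mem_nth. Qed.

Lemma Ti_onto n (T : {set {set 'I_n}}) Z : Z \in T -> exists i : 'I_(size (enum T)), Ti T i = Z.
Proof.
rewrite -mem_enum => ZT; have hi : (index Z (enum T) < size (enum T))%N by rewrite index_mem.
exists (Ordinal hi); by rewrite /Ti nth_index.
Qed.

Lemma Ti_inj n (T : {set {set 'I_n}}) : injective (fun i : 'I_(size (enum T)) => Ti T i).
Proof.
move=> i j /= e; apply: val_inj => /=.
by apply/eqP; rewrite -(nth_uniq set0 (ltn_ord i) (ltn_ord j) (enum_uniq _)); apply/eqP.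
Qed.

Lemma C_uniq n d (T : {set {set 'I_n}}) X (i j : 'I_(size (enum T))) :
  inL d T -> X \in CZ d (Ti T i) -> X \in CZ d (Ti T j) -> i = j.
Proof.
move=> LT; rewrite !inE => /andP[/eqP cX si] /andP[_ sj].
apply: Ti_inj => /=; apply: (uniq_member LT (Ti_mem i) (Ti_mem j) si sj).
by rewrite cX.
Qed.

Lemma card_decomp n d (T : {set {set 'I_n}}) (H : {set {set 'I_n}}) :
  inL d T -> (forall X, X \in H -> exists i : 'I_(size (enum T)), X \in CZ d (Ti T i)) ->
  #|H| = (\sum_(i < size (enum T)) #|H :&: CZ d (Ti T i)|)%N.
Proof.
move=> LT hH.
have e1 X : X \in H -> (\sum_(i < size (enum T)) (X \in CZ d (Ti T i)) = 1)%N.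
  move=> XH; have [i Xi] := hH X XH.
  rewrite (bigD1 i) //= Xi big1 // => j ji.
  case: (boolP (X \in CZ d (Ti T j))) => // Xj; move/eqP: ji; case; apply: (C_uniq LT Xj Xi).
rewrite -sum1_card (eq_bigr _ (fun X XH => esym (e1 X XH))) exchange_big /=.
apply: eq_bigr => i _; rewrite -sum1_card big_mkcond /= [RHS]big_mkcond /=.
by apply: eq_bigr => X _; rewrite in_setI; case: (X \in H); case: (X \in CZ d (Ti T i)).
Qed.

Definition Aset n d (T : {set {set 'I_n}}) (i : 'I_(size (enum T))) :=
  [set G : {set {set 'I_n}} | (G \subset CZ d (Ti T i))
       && onlytrivb (d - #|Ti T i|) (~: Ti T i) (projZ (Ti T i) G)].

Arguments Aset {n} d T i.

Definition FF n d (T : {set {set 'I_n}}) m :=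
  [set F : {ffun 'I_(size (enum T)) -> {set {set 'I_n}}} |
     [forall i, F i \in Aset d T i] && (\sum_i #|F i| == m)%N].

Lemma GZ_eq n d (H : {set {set 'I_n}}) (Z : {set 'I_n}) :
  (forall X, X \in H -> #|X| = d) -> GZ H Z = projZ Z (H :&: CZ d Z).
Proof.
move=> hH; rewrite /GZ /projZ.
suff -> : [set X in H | Z \subset X] = H :&: CZ d Z by [].
apply/setP => X; rewrite !inE; case XH: (X \in H) => //=; by rewrite hH ?eqxx.
Qed.

Lemma step1 n d (T : {set {set 'I_n}}) m : inL d T ->
  #|[set H : {set {set 'I_n}} | [&& #|H| == m, [forall X in H, #|X| == d]
        & is_join d [set [set X] | X in H] T]]| = #|FF d T m|.
Proof.
move=> LT.
set PS := [set H : {set {set 'I_n}} | _].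
pose Phi (H : {set {set 'I_n}}) : {ffun 'I_(size (enum T)) -> {set {set 'I_n}}} :=
  [ffun i : 'I_(size (enum T)) => H :&: CZ d (Ti T i)].
have hP H : H \in PS -> [/\ #|H| = m, (forall X, X \in H -> #|X| = d), refines H T
          & forall Z, Z \in T -> onlytriv (d - #|Z|) (~: Z) (GZ H Z)].
  rewrite inE => /and3P[/eqP cH /forall_inP sz J].
  have sz' X : X \in H -> #|X| = d by move=> XH; apply/eqP; apply: sz.
  have [] := (join_char (H:=H) (fun X XH => eq_leq (sz' X XH)) LT).1 J.
  by split.
have cover H : refines H T -> (forall X, X \in H -> #|X| = d) ->
    forall X, X \in H -> exists i : 'I_(size (enum T)), X \in CZ d (Ti T i).
  move=> rH sz X XH; have /exists_inP[Z ZT sZX] := forall_inP rH X XH.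
  have [i ei] := Ti_onto ZT; exists i; by rewrite inE sz // eqxx ei sZX.
have Phi_inj : {in PS &, injective Phi}.
  move=> H1 H2 h1 h2 e.
  have [_ s1 r1 _] := hP H1 h1; have [_ s2 r2 _] := hP H2 h2.
  apply/setP=> X; apply/idP/idP => XH.
    have [i Xi] := cover H1 r1 s1 X XH.
    have : X \in Phi H1 i by rewrite ffunE inE XH.
    by rewrite e ffunE inE => /andP[].
  have [i Xi] := cover H2 r2 s2 X XH.
  have : X \in Phi H2 i by rewrite ffunE inE XH.
  by rewrite -e ffunE inE => /andP[].
rewrite -(card_in_imset Phi_inj); suff -> : Phi @: PS = FF d T m by [].
apply/setP=> F; apply/imsetP/idP => [[H HP ->]|FF'].
  have [cH sz rH ot] := hP H HP.
  rewrite inE; apply/andP; split.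
    apply/forallP=> i; rewrite ffunE inE subsetIr /=.
    by apply/onlytrivP; rewrite -GZ_eq //; apply: ot; apply: Ti_mem.
  rewrite -cH (card_decomp LT (cover H rH sz)).
  by apply/eqP; apply: eq_bigr => i _; rewrite ffunE.
move: (FF'); rewrite inE => /andP[/forallP hA /eqP hm].
have hA' i : F i \subset CZ d (Ti T i) /\ onlytriv (d - #|Ti T i|) (~: Ti T i) (projZ (Ti T i) (F i)).
  by have := hA i; rewrite inE => /andP[h1 /onlytrivP h2].
pose H := \bigcup_i F i.
have eF (i : 'I_(size (enum T))) : H :&: CZ d (Ti T i) = F i.
  apply/setP=> X; rewrite inE; apply/andP/idP => [[/bigcupP[j _ Xj] Xi]|Xi].
    have [s _] := hA' j; have Xj' := subsetP s _ Xj.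
    by rewrite (C_uniq LT Xi Xj').
  split; first by apply/bigcupP; exists i.
  by have [s _] := hA' i; apply: (subsetP s).
have sz X : X \in H -> #|X| = d.
  case/bigcupP=> j _ Xj; have [s _] := hA' j.
  by have := subsetP s _ Xj; rewrite inE => /andP[/eqP].
have rH : refines H T.
  apply/forall_inP=> X /bigcupP[j _ Xj]; have [s _] := hA' j.
  have := subsetP s _ Xj; rewrite inE => /andP[_ sj].
  by apply/exists_inP; exists (Ti T j) => //; apply: Ti_mem.
exists H.
  rewrite inE; apply/and3P; split.
  - rewrite (card_decomp LT (cover H rH sz)) -hm; apply/eqP.
    by apply: eq_bigr => i _; rewrite eF.
  - by apply/forall_inP=> X XH; rewrite sz.
  apply/(join_char (H:=H) (fun X XH => eq_leq (sz X XH)) LT); split => // Z ZT.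
  have [i <-] := Ti_onto ZT; rewrite (GZ_eq _ sz) eF; by have [] := hA' i.
by apply/ffunP=> i; rewrite ffunE eF.
Qed.

Lemma step2 n d (T : {set {set 'I_n}}) m :
  #|FF d T m| =
  (\sum_(f : {ffun 'I_(size (enum T)) -> 'I_m.+1} | (\sum_(i < size (enum T)) (f i : nat) == m))
      \prod_(i < size (enum T)) #|AF d (Ti T i) (f i)|)%N.
Proof.
have bnd F i : F \in FF d T m -> (#|F i| <= m)%N.
  rewrite inE => /andP[_ /eqP <-]; rewrite (bigD1 i) //=; exact: leq_addr.
pose fF (F : {ffun 'I_(size (enum T)) -> {set {set 'I_n}}}) : {ffun 'I_(size (enum T)) -> 'I_m.+1} :=
  [ffun i => inord #|F i|].
have fFE F i : F \in FF d T m -> (fF F i : nat) = #|F i|.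
  by move=> FF'; rewrite ffunE inordK // ltnS bnd.
rewrite -sum1_card (partition_big fF (fun f : {ffun 'I_(size (enum T)) -> 'I_m.+1} => \sum_(i < size (enum T)) (f i : nat) == m)%N); last first.
  move=> F FF'; apply/eqP; move: (FF'); rewrite inE => /andP[_ /eqP hm].
  by apply: (etrans _ hm); apply: eq_bigr => i _; rewrite fFE.
apply: eq_bigr => f /eqP hf.
rewrite sum1dep_card.
pose B := fun i : 'I_(size (enum T)) => AF d (Ti T i) (f i).
rewrite -(cardsXn B).
apply: eq_card => F; rewrite !inE.
apply/andP/forallP => [[FF' /eqP e] i|h].
  move: (FF'); rewrite inE => /andP[/forallP hA _].
  have := hA i; rewrite /B !inE => /andP[-> ->] /=.
  have FF0 : F \in FF d T m by rewrite inE.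
  by rewrite andbT -(fFE F i FF0) e.
have hA (i : 'I_(size (enum T))) : F i \in Aset d T i /\ #|F i| = f i.
  by have := h i; rewrite /B !inE => /and3P[h1 /eqP h2 h3]; rewrite h1 h3 h2.
have FF' : F \in FF d T m.
  rewrite inE; apply/andP; split; first by apply/forallP=> i; have [] := hA i.
  by rewrite -hf; apply/eqP; apply: eq_bigr => i _; have [_ ->] := hA i.
split; first by move: FF'; rewrite inE. apply/eqP/ffunP=> i; apply: val_inj => /=; rewrite fFE //.
by have [_ ->] := hA i.
Qed.

Lemma AF_zero n d (Z : {set 'I_n}) (f : nat) : (#|Z| <= d)%N ->
  ~~ [&& (0 < f)%N, (codim d Z <= f%:Z)%R & (codim d Z == 1%R) ==> (f == 1%N)] ->
  #|AF d Z f| = 0%N.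
Proof.
move=> kd nM; case: (set_0Vmem (AF d Z f)) => [->|[G GA]]; first by rewrite cards0.
exfalso.
have lo := AF_lower GA.
move: nM; rewrite /codim.
have [cZ|cZ] := eqVneq #|Z| d.
  move: GA; rewrite AF_top //; case: eqP => [->|] //; last by rewrite inE.
  move=> _ /negP; apply; rewrite cZ; apply/and3P; split => //; first lia.
  by apply/implyP.
have h1 : (0 < f)%N by lia.
have h2 : ((d.+1)%:Z - (#|Z|)%:Z <= f%:Z)%R by lia.
have h3 : ((d.+1)%:Z - (#|Z|)%:Z == 1%R) = false.
  by apply/negbTE/eqP; move/eqP: cZ => cZ'; lia.
by rewrite h1 h2 h3.
Qed.

Lemma AF_pos n d (Z : {set 'I_n}) (f : nat) : (#|Z| <= d)%N ->
  [&& (0 < f)%N, (codim d Z <= f%:Z)%R & (codim d Z == 1%R) ==> (f == 1%N)] ->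
  #|AF d Z f| = kappa (d - #|Z|) f [set (set0 : {set 'I_(n - #|Z|)})].
Proof.
move=> kd /and3P[h1 h2 h3].
have [cZ|cZ] := eqVneq #|Z| d; last first.
  by apply: AF_kappa; rewrite ltn_neqAle cZ.
have f1 : f = 1%N.
  by apply/eqP; move: h3; rewrite /codim cZ => /implyP; apply; apply/eqP; lia.
rewrite AF_top // f1 /= cards1 /kappa.
have -> : (d - #|Z| == 0)%N by apply/eqP; lia.
by rewrite eqxx.
Qed.

Unset Implicit Arguments.
Theorem proposition4p8 (d n : nat) (T : {set {set 'I_n}}) (m : nat) :
  (d < n)%N -> inL d T -> T != [set set0] -> (0 < m)%N ->
  kappa d m T =
  (\sum_(f : {ffun 'I_(size (enum T)) -> 'I_m.+1} |
          [&& [forall i : 'I_(size (enum T)), (0 < f i)%N],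
              [forall i : 'I_(size (enum T)), (codim d (nth set0 (enum T) i) <= (f i : nat)%:Z)%R],
              [forall i : 'I_(size (enum T)), (codim d (nth set0 (enum T) i) == 1%R) ==> (f i == 1%N :> nat)]
            & (\sum_(i < size (enum T)) (f i : nat) == m)%N])
     \prod_(i < size (enum T))
        kappa (d - #|nth set0 (enum T) i|) (f i)
              [set (set0 : {set 'I_(n - #|nth set0 (enum T) i|)})])%N.
Proof.
move=> hdn LT nT m0.
have -> : kappa d m T =
  #|[set H : {set {set 'I_n}} | [&& #|H| == m, [forall X in H, #|X| == d]
        & is_join d [set [set X] | X in H] T]]|.
  by rewrite /kappa (negbTE nT) andbF.
rewrite step1 // step2.
have kd (i : 'I_(size (enum T))) : (#|Ti T i| <= d)%N := inLK_size LT (Ti_mem i).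
rewrite (bigID (fun f : {ffun 'I_(size (enum T)) -> 'I_m.+1} =>
   [&& [forall i : 'I_(size (enum T)), (0 < f i)%N],
       [forall i : 'I_(size (enum T)), (codim d (nth set0 (enum T) i) <= (f i : nat)%:Z)%R]
     & [forall i : 'I_(size (enum T)), (codim d (nth set0 (enum T) i) == 1%R) ==> (f i == 1%N :> nat)]])) /=.
rewrite [X in (_ + X)%N]big1 ?addn0; last first.
  move=> f /andP[_ nM].
  have [i ni] : exists i : 'I_(size (enum T)),
      ~~ [&& (0 < f i)%N, (codim d (Ti T i) <= (f i : nat)%:Z)%R
           & (codim d (Ti T i) == 1%R) ==> (f i == 1%N :> nat)].
    apply/existsP; apply: contraR nM => /existsPn h.
    apply/and3P; split; apply/forallP => i; have := h i; rewrite negbK => /and3P[] //.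
  by rewrite (bigD1 i) //= (AF_zero (kd i) ni) mul0n.
apply: eq_big => [f|f /andP[_ /and3P[/forallP a /forallP b /forallP c]]].
  by rewrite andbC -!andbA.
apply: eq_bigr => i _; apply: AF_pos; first exact: kd.
by rewrite a b c.
Qed.
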